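(* For every join query $\mathcal R$ and every degree configuration $c\in\mathcal C_2$, $$\mathsf{MO}(\mathcal R(c))\le \mathsf{DBP}(\mathcal R(c),2)+|C|\log_{\mathrm{IN}}2,$$ where $C$ is a cover attaining the minimum in the definition of $\mathsf{DBP}(\mathcal R(c),2)$.
   Context: A join query consists of a finite set $\mathcal R$ of relations; each $R$ is a finite set of tuples over attribute set $\mathsf{attr}(R)$; $\mathcal A=\bigcup_R\mathsf{attr}(R)$. $\mathrm{IN}=\sum_{R\in\mathcal R}|R|\ge2$ (input size of the original query), $\log=\log_{\mathrm{IN}}$. For a relation $S$, $A\subseteq\mathsf{attr}(S)$, $v\in\pi_A(S)$: $\mathsf{deg}(v,S,A)=|\{t\in S:\pi_A(t)=v\}|$; $d_{S,A}=\max_{v\in\pi_A(S)}\mathsf{deg}(v,S,A)$ for $A\ne\emptyset$, $d_{S,\emptyset}=|S|$; for $A\subseteq B\subseteq\mathsf{attr}(S)$, $d(A,B,S)=\log d_{\pi_B(S),A}$. Degree configurations: buckets $B_l=[2^l,2^{l+1})$, $l\in\mathbb N$, ordered by index; $c\in\mathcal C_2$ maps each $(R,A)$, $A\subseteq\mathsf{attr}(R)$, to a bucket with $A'\subseteq A\Rightarrow c(R,A)\le c(R,A')$, $c(R,\mathsf{attr}(R))=B_0$, $c(R,\emptyset)=B_{\lfloor\log_2|R|\rfloor}$; $R(c)=\{t\in R:\forall A\subseteq\mathsf{attr}(R),\ \mathsf{deg}(\pi_A(t),R,A)\in c(R,A)\}$, $\mathcal R(c)=\{R(c)\}$ (assumed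 nonempty). MO: for a set $\mathcal S$ of relations, variables $s_F$ ($F\subseteq\mathcal A$), constraints $s_\emptyset=0$; $s_F\le s_{F'}$ for $F\subseteq F'$; $s_{B\cup E}\le s_{A\cup E}+d(A,B,S)$ for all $S\in\mathcal S$, $E\subseteq\mathcal A$, $A\subseteq B\subseteq\mathsf{attr}(S)$; $\mathsf{MO}(\mathcal S)=\max s_{\mathcal A}$. DBP: a cover is a set $C$ of pairs $(S,A)$, $S\in\mathcal S$, $A\subseteq\mathsf{attr}(S)$, with $\bigcup_{(S,A)\in C}A=\mathcal A$; $O_{C,L}$ is the optimal value of minimizing $\sum_{a\in\mathcal A}v_a$ over real $v_a\ge0$ with $\sum_{a\in A'}v_a\ge\log(d_{\pi_A(S),A\setminus A'}/L)$ for all $(S,A)\in C$, $A'\subseteq A$; $\mathsf{DBP}(\mathcal S,L)=\min_C O_{C,L}$. *)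

(* Defs.v *)
From Stdlib Require Import Reals.
From mathcomp Require Import all_boot.
Set Implicit Arguments. Unset Strict Implicit. Unset Printing Implicit Defensive.

(* A tuple over attribute type A with values in V: a finite function that is
   [Some _] exactly on the attributes it is defined on. *)
Notation jtup A V := {ffun A -> option V}.
Notation jrel A V := ({set A} * {set jtup A V})%type.

Section JoinDefs.
Variables A V : finType.
Local Open Scope R_scope.

Definition attr (r : jrel A V) : {set A} := r.1.
Definition tups (r : jrel A V) : {set jtup A V} := r.2.

Definition wf_rel (r : jrel A V) : Prop :=
  forall t, t \in tups r -> forall a, (t a != None) = (a \in attr r).

Definition proj_t (B : {set A}) (t : jtup A V) : jtup A V :=
  [ffun a => if a \in B then t a else None].

Definition proj (B : {set A}) (r : jrel A V) : jrel A V :=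
  (B, [set proj_t B t | t in tups r]).

Definition deg (v : jtup A V) (r : jrel A V) (B : {set A}) : nat :=
  #|[set t in tups r | proj_t B t == v]|.

Definition dmax (r : jrel A V) (B : {set A}) : nat :=
  if B == set0 then #|tups r|
  else \max_(v in tups (proj B r)) deg v r B.

Definition IN (Q : {set jrel A V}) : nat := \sum_(r in Q) #|tups r|.

Definition logIN (n : nat) (x : R) : R := Rdiv (ln x) (ln (INR n)).

Definition dlog (n : nat) (X Y : {set A}) (r : jrel A V) : R :=
  logIN n (INR (dmax (proj Y r) X)).

Definition calA (S : {set jrel A V}) : {set A} := \bigcup_(r in S) attr r.

(* Degree configurations in C_2: c r X is the index l of the bucket
   B_l = [2^l, 2^(l+1)) assigned to (r, X). *)
Definition in_bucket (n l : nat) : bool := (2 ^ l <= n < 2 ^ l.+1)%N.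

Definition is_config (Q : {set jrel A V}) (c : jrel A V -> {set A} -> nat) : Prop :=
  forall r, r \in Q ->
    (forall X Y : {set A}, X \subset Y -> Y \subset attr r -> (c r Y <= c r X)%N) /\
    c r (attr r) = 0%N /\
    c r set0 = trunc_log 2 #|tups r|.

Definition restrict (c : jrel A V -> {set A} -> nat) (r : jrel A V) : jrel A V :=
  (attr r, [set t in tups r | [forall X : {set A},
      (X \subset attr r) ==> in_bucket (deg (proj_t X t) r X) (c r X)]]).

Definition restrictQ (c : jrel A V -> {set A} -> nat) (Q : {set jrel A V}) : {set jrel A V} :=
  [set restrict c r | r in Q].

(* Feasible points of the MO linear program for S (n = IN of the original query) *)
Definition MO_feasible (n : nat) (S : {set jrel A V}) (s : {set A} -> R) : Prop :=
  s set0 = 0 /\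
  (forall F F' : {set A}, F \subset F' -> F' \subset calA S -> (s F <= s F')) /\
  (forall r (E X Y : {set A}), r \in S -> E \subset calA S -> X \subset Y -> Y \subset attr r ->
     (s (Y :|: E) <= s (X :|: E) + dlog n X Y r)).

Definition is_cover (S : {set jrel A V}) (C : {set (jrel A V * {set A})}) : Prop :=
  (forall p, p \in C -> p.1 \in S /\ p.2 \subset attr p.1) /\
  \bigcup_(p in C) p.2 = calA S.

Definition DBP_feasible (n : nat) (S : {set jrel A V}) (L : R)
    (C : {set (jrel A V * {set A})}) (v : A -> R) : Prop :=
  (forall a, a \in calA S -> (0 <= v a)) /\
  (forall p (A' : {set A}), p \in C -> A' \subset p.2 ->
     (logIN n (INR (dmax (proj p.2 p.1) (p.2 :\: A')) / L)
        <= \big[Rplus/0]_(a in A') v a)).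

Definition DBP_obj (S : {set jrel A V}) (v : A -> R) : R :=
  \big[Rplus/0]_(a in calA S) v a.

Definition is_O (n : nat) (S : {set jrel A V}) (L : R)
    (C : {set (jrel A V * {set A})}) (o : R) : Prop :=
  (exists v, DBP_feasible n S L C v /\ DBP_obj S v = o) /\
  (forall v, DBP_feasible n S L C v -> (o <= DBP_obj S v)).

End JoinDefs.

(* Main.v *)
Require Import Defs.
From Stdlib Require Import Reals Lra.
From mathcomp Require Import all_boot.
From HB Require Import structures.
Local Open Scope R_scope.

HB.instance Definition _ := Monoid.isComLaw.Build R 0 Rplus (fun x y z => esym (Rplus_assoc x y z)) Rplus_comm Rplus_0_l.

Lemma lnpos (x : R) : 1 < x -> 0 < ln x.
Proof. intro H; rewrite <- ln_1; apply ln_increasing; lra. Qed.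

Lemma ln_0 : ln 0 = 0.
Proof. rewrite /ln; case: Rlt_dec => [h|_]; [exfalso; exact: (Rlt_irrefl 0 h) | reflexivity]. Qed.

Lemma logIN2_ge0 (n : nat) : (2 <= n)%N -> 0 <= logIN n 2.
Proof.
move=> Hn; rewrite /logIN.
have H2 : (2 <= INR n). { replace 2 with (INR 2) by (simpl; lra). apply le_INR; apply/leP; exact Hn. }
apply Rlt_le; apply Rdiv_lt_0_compat; apply lnpos; lra.
Qed.

Lemma logIN_half (n : nat) (x : R) : (2 <= n)%N -> 0 <= x ->
  logIN n x <= logIN n (x / 2) + logIN n 2.
Proof.
move=> Hn Hx.
have H2 : (2 <= INR n). { replace 2 with (INR 2) by (simpl; lra). apply le_INR; apply/leP; exact Hn. }
have Hl : 0 < ln (INR n) by apply lnpos; lra.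
destruct (Rle_lt_or_eq_dec 0 x Hx) as [Hp|He].
- rewrite /logIN {1}/Rdiv ln_mult; [|lra|lra]. rewrite ln_Rinv; [|lra]. right; field; lra.
- subst x. rewrite /Rdiv Rmult_0_l /logIN.
  have: 0 <= logIN n 2 by apply logIN2_ge0.
  rewrite /logIN /Rdiv ln_0 ?Rmult_0_l; lra.
Qed.

Section Main.
Variables (A V : finType) (n : nat) (S : {set jrel A V}) (C : {set (jrel A V * {set A})})
  (v : A -> R) (s : {set A} -> R).
Hypothesis Hn : (2 <= n)%N.
Hypothesis HC : is_cover S C.
Hypothesis Hv : DBP_feasible n S 2 C v.
Hypothesis Hs : MO_feasible n S s.

Lemma sum_ge0 (X : {set A}) : X \subset calA S -> 0 <= \big[Rplus/0]_(a in X) v a.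
Proof.
move=> HX; apply: (big_ind (fun x => 0 <= x)); [lra| move=> ? ? ? ?; lra|].
move=> a Ha; apply Hv.1; exact: (subsetP HX).
Qed.

Lemma step p (E : {set A}) : p \in C -> E \subset calA S ->
  s (p.2 :|: E) <= s E + \big[Rplus/0]_(a in p.2 :\: E) v a + logIN n 2.
Proof.
move=> Hp HE.
have [Hp1 Hp2] := HC.1 p Hp.
have H1 := Hs.2.2 p.1 E (p.2 :&: E) p.2 Hp1 HE (subsetIl _ _) Hp2.
have Heq : p.2 :&: E :|: E = E.
  { apply/setP => x; rewrite !inE; case: (x \in E); by rewrite ?andbT ?andbF ?orbT ?orbF. }
rewrite Heq in H1.
have H2 := Hv.2 p (p.2 :\: E) Hp (subsetDl _ _).
rewrite setDDr setDv set0U in H2.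
have H3 := @logIN_half n (INR (dmax (proj p.2 p.1) (p.2 :&: E))) Hn (pos_INR _).
rewrite /dlog in H1. lra.
Qed.

Lemma chain (l : seq (jrel A V * {set A})) : all (fun p => p \in C) l ->
  s (\bigcup_(p <- l) p.2) <=
  \big[Rplus/0]_(a in \bigcup_(p <- l) p.2) v a + INR (size l) * logIN n 2.
Proof.
elim: l => [|p l IH].
- rewrite /= big_nil Hs.1 big_set0; lra.
- move=> /= /andP [Hp Hl].
  have HE : \bigcup_(p <- l) p.2 \subset calA S.
  { rewrite -HC.2 big_seq; apply: (big_ind (fun X : {set A} => X \subset \bigcup_(q in C) q.2)).
    - exact: sub0set.
    - by move=> X Y HX HY; rewrite subUset HX HY.
    - move=> q Hq; apply: bigcup_sup. by move/allP: Hl => /(_ q Hq). }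
  rewrite big_cons.
  set E := \bigcup_(p <- l) p.2 in IH HE *.
  have -> : p.2 :|: E = (p.2 :\: E) :|: E.
  { apply/setP => x; rewrite !inE; by case: (x \in E); case: (x \in p.2). }
  have Hsplit : \big[Rplus/0]_(a in (p.2 :\: E) :|: E) v a =
     \big[Rplus/0]_(a in p.2 :\: E) v a + \big[Rplus/0]_(a in E) v a.
  { rewrite (eq_bigl [predU (p.2 :\: E) & E]); last by move=> x; rewrite !inE.
    rewrite bigU //.
    rewrite -setI_eq0; apply/eqP/setP => x; rewrite !inE; by case: (x \in E); rewrite ?andbF. }
  rewrite Hsplit.
  have H := @step p E Hp HE.
  have -> : p.2 :\: E :|: E = p.2 :|: E.
  { apply/setP => x; rewrite !inE; by case: (x \in E); case: (x \in p.2). }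
  have := IH Hl. change (match size l with 0%N => 1 | _.+1 => INR (size l) + 1 end) with (INR (size l).+1). rewrite S_INR. move=> IH2. clearbody E. set B2 := \big[Rplus/0]_(a in E) v a in IH2 *. set B1 := \big[Rplus/0]_(a in p.2 :\: E) v a in H *. set L := logIN n 2 in H *. change (logIN n 2) with L in IH2. apply: (Rle_trans _ _ _ H). clearbody B1 B2 L. lra.
Qed.

End Main.

Theorem theorem4p3 (A V : finType) (Q : {set jrel A V})
    (c : jrel A V -> {set A} -> nat) :
  (forall r, r \in Q -> wf_rel r) ->
  (2 <= IN Q)%N ->
  is_config Q c ->
  (forall r, r \in Q -> tups (restrict c r) != set0) ->
  forall (C : {set (jrel A V * {set A})}) (oC : R),
    is_cover (restrictQ c Q) C ->
    is_O (IN Q) (restrictQ c Q) 2 C oC ->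
    (forall C' v', is_cover (restrictQ c Q) C' ->
       DBP_feasible (IN Q) (restrictQ c Q) 2 C' v' ->
       (oC <= DBP_obj (restrictQ c Q) v')) ->
    forall s, MO_feasible (IN Q) (restrictQ c Q) s ->
      (s (calA (restrictQ c Q)) <= oC + INR #|C| * logIN (IN Q) 2).
Proof.
move=> _ Hn _ _ C oC HC [[v [Hv Hobj]] _] _ s Hs.
have H := @chain A V _ _ C v s Hn HC Hv Hs (enum C).
have Hall : all (fun p => p \in C) (enum C) by apply/allP => p; rewrite mem_enum.
have Heq : \bigcup_(p <- enum C) p.2 = calA (restrictQ c Q).
{ rewrite -HC.2 big_enum //. }
rewrite Heq -cardE in H. rewrite -Hobj /DBP_obj. exact: H Hall.
Qed.
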